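(* Let $q(w)=w^4$, $\psi(w)=\frac{iw+1}{w+i}$, $\Psi[z:w:t]=[z:iw+t:it+w]$ (an automorphism of $\mathbb{P}^2$), and $X:=\{[z:w:t]\in\mathbb{P}^2:z=0\}$. Let $R>0$, $\epsilon_0>0$, $l\ge1$ and open neighborhoods $U_1^l,U_2^l,U_3^l$ of $r_1=1,r_2=e^{2i\pi/3},r_3=e^{4i\pi/3}$ be as in the context. There exist $\tilde l\ge1$ and $\tilde\lambda>1$ such that for each $\alpha\in\mathbb{C}^*$, if $\eta\in\mathbb{C}^*$ is sufficiently close to $0$, then the map $F_\eta(z,w):=(\tilde\lambda z+\eta q^{\tilde l}(z),q^{\tilde l}(w))$ (as an endomorphism of $\mathbb{P}^2$) satisfies $$X\cup\overline{(\alpha\epsilon_0^{-1}\mathbb{D})\times\textstyle\bigcup_{i=1}^3U_i^l}\subset F_\eta\circ\Psi\Big((\alpha\epsilon_0^{-1}\mathbb{D})\times(R\mathbb{D}\setminus R^{-1}\mathbb{D})\Big).$$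
   Context: Setting: $R>0$ is large enough that $\psi^{-1}(\{r_1,r_2,r_3\})\subset R\mathbb{D}\setminus R^{-1}\mathbb{D}$; $\epsilon_0>0$ and the neighborhoods $U_i^l$ of $r_i$ are those given (for this $R$) by the statement: there exist $0<\lambda<1$, $\epsilon_0>0$, $l_0$ and neighborhoods $(U_i^l)_{l\ge l_0}$ of $r_i$ with exponentially shrinking diameters such that for all $l\ge l_0$, $\alpha\in\mathbb{C}^*$, the map $(z,w)\mapsto(\lambda z+\alpha w,w^{4^l})$ maps $(\alpha\epsilon_0^{-1}\mathbb{D})\times\bigcup_iU_i^l$ onto a set containing $\overline{(\alpha\epsilon_0^{-1}\mathbb{D})\times(R\mathbb{D}\setminus R^{-1}\mathbb{D})}$; and $l\ge l_0$ is chosen with $\overline{\bigcup_{i=1}^3(U_i^l\cup\psi^{-1}(U_i^l))}\subset R\mathbb{D}\setminus R^{-1}\mathbb{D}$. Subsets of $\mathbb{C}^2$ are viewed in $\mathbb{P}^2$ via $(z,w)\mapsto[z:w:1]$. $\mathbb{D}$ is the unit disc. *)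

(* Defs.v *)
From HB Require Import structures.
From mathcomp Require Import all_boot all_order all_algebra.
From mathcomp Require Import all_classical all_reals all_analysis.
From mathcomp Require Import complex.
Import numFieldTopology.Exports numFieldNormedType.Exports.
Import Order.TTheory GRing.Theory Num.Theory.

Set Implicit Arguments.
Unset Strict Implicit.
Unset Printing Implicit Defensive.

Local Open Scope ring_scope.
Local Open Scope classical_set_scope.
Local Open Scope complex_scope.

(* The usual (metric) topology on C = R[i], obtained from its numClosedFieldType
   structure (norm |.|); C*C gets the product topology. *)
HB.instance Definition _ (R : rcfType) := PseudoPointedMetric.copy R[i] (R[i])^o.

Definition expi (R : realType) (t : R) : R[i] := (cos t)%:C + 'i * (sin t)%:C.

(* r_{k+1} = e^{2 i pi k / 3}, k = 0,1,2 : r_1 = 1, r_2 = e^{2i pi/3}, r_3 = e^{4i pi/3} *)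
Definition root3 (R : realType) (k : 'I_3) : R[i] := expi (2 * pi * k%:R / 3 : R).

Definition psi (R : rcfType) (w : R[i]) : R[i] := ('i * w + 1) / (w + 'i).

(* psi^{-1}(U) for U a subset of C (the pole w = -i is mapped to infinity, not in U) *)
Definition psi_preim (R : rcfType) (U : set R[i]) : set R[i] :=
  [set w | w != - 'i /\ U (psi w)].

Definition sdisc (R : rcfType) (a : R[i]) : set R[i] :=
  [set a * u | u in [set u : R[i] | `|u| < 1]].

Definition annulus (R : rcfType) (r : R) : set R[i] :=
  sdisc r%:C `\` sdisc (r^-1)%:C.

(* ---------- the projective plane P^2 via homogeneous coordinates [z:w:t] ---------- *)
Definition pt (R : rcfType) := (R[i] * R[i] * R[i])%type.

Definition P2eq (R : rcfType) (p q : pt R) : Prop :=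
  exists c : R[i], c != 0 /\ p = (c * q.1.1, c * q.1.2, c * q.2).

(* A subset of P^2 is represented by the set of all its (nonzero) homogeneous
   representatives. *)

Definition Xline (R : rcfType) : set (pt R) :=
  [set p | p <> (0, 0, 0) /\ p.1.1 = 0].

(* a subset S of C^2 viewed in P^2 via (z,w) |-> [z:w:1] *)
Definition aff (R : rcfType) (S : set (R[i] * R[i])) : set (pt R) :=
  [set p | p.2 != 0 /\ S (p.1.1 / p.2, p.1.2 / p.2)].

(* image in P^2 of the set S (of representatives) under the map of P^2 induced by
   the homogeneous polynomial map f (f q <> 0 whenever q <> 0 for an endomorphism) *)
Definition pimage (R : rcfType) (f : pt R -> pt R) (S : set (pt R)) : set (pt R) :=
  [set p | p <> (0, 0, 0) /\ exists q, S q /\ f q <> (0, 0, 0) /\ P2eq p (f q)].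

Definition Psi_h (R : rcfType) (p : pt R) : pt R :=
  (p.1.1, 'i * p.1.2 + p.2, 'i * p.2 + p.1.2).

(* the endomorphism of P^2 of degree d extending (z,w) |-> (lam z + eta z^d, w^d):
   [z:w:t] |-> [lam z t^(d-1) + eta z^d : w^d : t^d] *)
Definition F_h (R : rcfType) (lam eta : R[i]) (d : nat) (p : pt R) : pt R :=
  (lam * p.1.1 * p.2 ^+ d.-1 + eta * p.1.1 ^+ d, p.1.2 ^+ d, p.2 ^+ d).

(* Main.v *)
Require Import Defs.
From HB Require Import structures.
From mathcomp Require Import all_boot all_order all_algebra.
From mathcomp Require Import all_classical all_reals all_analysis.
From mathcomp Require Import complex.
Import numFieldTopology.Exports numFieldNormedType.Exports.
Import Order.TTheory GRing.Theory Num.Theory.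
Local Open Scope ring_scope.
Local Open Scope classical_set_scope.
Local Open Scope complex_scope.
From mathcomp Require Import ring lra.

Lemma re_sqrtc_ge0 (R : rcfType) (x : R[i]) :
  exists a b, sqrtc x = a +i* b /\ 0 <= a.
Proof. by case: x => a b /=; do 2 eexists; split; [reflexivity| apply: sqrtr_ge0]. Qed.

Lemma real_step (R : realFieldType) (x y rho N : R) :
  0 <= x -> 0 <= rho -> rho ^+ 2 = x ^+ 2 + y ^+ 2 -> 0 < N ->
  (x ^+ 2 + y ^+ 2 - (x ^+ 2 - y ^+ 2)) * N <= 2 * (x ^+ 2 + y ^+ 2) ->
  (rho - x) * (N * 2) <= 2 * rho.
Proof.
move=> hx hr hrho hN hI.
have hxr : x <= rho.
  have : x ^+ 2 <= rho ^+ 2 by rewrite hrho; nra.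
  by rewrite ler_pXn2r // ?nnegrE.
have hy : y ^+ 2 * N <= rho ^+ 2 by nra.
have [r0|rpos] := eqVneq rho 0.
  have x0 : x = 0 by apply/le_anti; rewrite hx -r0 hxr.
  by rewrite r0 x0 !(subrr, mul0r, mulr0).
have rp : 0 < rho by rewrite lt0r rpos.
suff : (rho - x) * N * rho <= rho * rho by rewrite ler_pM2r //; nra.
have h3 : 0 <= (rho - x) * x * N by apply: mulr_ge0; [apply: mulr_ge0; rewrite ?subr_ge0|]; lra.
have e2 : rho * rho = x ^+ 2 + y ^+ 2 by rewrite -hrho expr2.
nra.
Qed.

Lemma root_lemma (R : rcfType) m (c : R[i]) : exists a b : R,
  (a +i* b) ^+ (2 ^ m) = c /\
  (Num.sqrt (a ^+ 2 + b ^+ 2) - a) * 2 ^+ m <= 2 * Num.sqrt (a ^+ 2 + b ^+ 2).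
Proof.
elim: m c => [|m IH] c.
  case: c => a b; exists a, b; rewrite expn0 expr1 expr0 mulr1; split => //.
  have h1 : `|a| <= Num.sqrt (a ^+ 2 + b ^+ 2).
    by rewrite -sqrtr_sqr ler_wsqrtr // lerDl sqr_ge0.
  have h2 : - a <= `|a| by rewrite -normrN ler_norm.
  have h3 : 0 <= Num.sqrt (a ^+ 2 + b ^+ 2) by rewrite sqrtr_ge0.
  lra.
have [a' [b' [ec hb]]] := IH c.
have [x [y [ex hx]]] := @re_sqrtc_ge0 _ (a' +i* b').
have sq := @sqr_sqrtc _ (a' +i* b'); rewrite ex in sq.
have sq' := sq; rewrite expr2 /= in sq'; case: sq' => ea eb.
exists x, y; split.
  by rewrite expnS exprM sq.
have hs : Num.sqrt (a' ^+ 2 + b' ^+ 2) = x ^+ 2 + y ^+ 2.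
  rewrite -ea -eb.
  have -> : (x * x - y * y) ^+ 2 + (x * y + y * x) ^+ 2 = (x ^+ 2 + y ^+ 2) ^+ 2 by ring.
  by rewrite sqrtr_sqr ger0_norm // addr_ge0 ?sqr_ge0.
rewrite hs -ea in hb.
rewrite [2 ^+ m.+1]exprSr.
apply: (@real_step _ x y) => //.
- by rewrite sqr_sqrtr // addr_ge0 ?sqr_ge0.
Qed.

Lemma sdisc_real (R : rcfType) (r : R) (x : R[i]) : 0 < r ->
  (sdisc r%:C x <-> `|x| < r%:C).
Proof.
move=> r0; have rC : 0 < r%:C by rewrite ltcR.
have nr : `|r%:C| = r%:C by rewrite ger0_norm // ltW.
split.
  case=> u /= hu <-; rewrite normrM nr.
  by rewrite -[X in _ < X]mulr1 ltr_pM2l.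
move=> hx; exists (x / r%:C); last by rewrite mulrC divfK // gt_eqF.
by rewrite /= normf_div nr ltr_pdivrMr // mul1r.
Qed.

Lemma key_w (R : rcfType) (Rad a b : R) : 0 < Rad ->
  a^+2 + (b+1)^+2 < Rad^+2 * (a^+2 + (b-1)^+2) ->
  a^+2 + (b-1)^+2 < Rad^+2 * (a^+2 + (b+1)^+2) ->
  annulus Rad ((1 - 'i * (a +i* b)) / ((a +i* b) - 'i)) /\
  (1 - 'i * (a +i* b)) / ((a +i* b) - 'i) != - 'i /\
  psi ((1 - 'i * (a +i* b)) / ((a +i* b) - 'i)) = a +i* b /\
  `|(1 - 'i * (a +i* b)) / ((a +i* b) - 'i)| < Rad%:C.
Proof.
move=> R0 h1 h2.
have ep : 1 - 'i * (a +i* b) = (1 + b) +i* (- a) by simpc.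
have eq : (a +i* b) - 'i = a +i* (b - 1) by simpc.
rewrite ep eq.
set p := (1 + b) +i* (- a); set q := a +i* (b - 1); set s := a +i* b.
have Qpos : 0 < a^+2 + (b-1)^+2.
  have : 0 <= a^+2 + (b+1)^+2 by rewrite addr_ge0 ?sqr_ge0.
  move=> h; rewrite ltNge; apply/negP => hle.
  have : Rad^+2 * (a^+2 + (b-1)^+2) <= 0.
    by rewrite pmulr_rle0 ?exprn_gt0.
  lra.
have Ppos : 0 < a^+2 + (b+1)^+2.
  have : 0 <= a^+2 + (b-1)^+2 by rewrite addr_ge0 ?sqr_ge0.
  move=> h; rewrite ltNge; apply/negP => hle.
  have : Rad^+2 * (a^+2 + (b+1)^+2) <= 0.
    by rewrite pmulr_rle0 ?exprn_gt0.
  lra.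
have np : `|p| = (Num.sqrt (a^+2 + (b+1)^+2))%:C.
  by rewrite /p; simpc; rewrite sqrrN addrC [1 + b]addrC.
have nq : `|q| = (Num.sqrt (a^+2 + (b-1)^+2))%:C by rewrite /q; simpc.
have sqR : forall X : R, 0 <= X -> Rad * Num.sqrt X = Num.sqrt (Rad^+2 * X).
  by move=> X hX; rewrite sqrtrM ?sqr_ge0 // sqrtr_sqr ger0_norm // ltW.
have A : `|p| < Rad%:C * `|q|.
  rewrite np nq -rmorphM ltcR sqR ?ltW // ltr_sqrt //.
  by rewrite mulr_gt0 // exprn_gt0.
have B : `|q| < Rad%:C * `|p|.
  rewrite np nq -rmorphM ltcR sqR ?ltW // ltr_sqrt //.
  by rewrite mulr_gt0 // exprn_gt0.
have q0 : q != 0.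
  apply/eqP => q0; move: A; rewrite q0 normr0 mulr0 => A.
  by have := lt_le_trans A (normr_ge0 p); rewrite ltxx.
have q0' : 0 < `|q| by rewrite normr_gt0.
have Rc : 0 < Rad%:C by rewrite ltcR.
have nw : `|p / q| < Rad%:C by rewrite normf_div ltr_pdivrMr // mulrC.
have ii : 'i * 'i = -1 :> R[i] by rewrite -expr2 sqr_i.
have e1 : p / q + 'i = (2%:R)%:C / q.
  have -> : p / q + 'i = (p + 'i * q) / q by field.
  by congr (_ / _); rewrite /p /q; simpc; congr (_ +i* _); ring.
have e2 : 'i * (p / q) + 1 = ((2%:R)%:C * s) / q.
  have -> : 'i * (p / q) + 1 = ('i * p + q) / q by field.
  by congr (_ / _); rewrite /p /q /s; simpc; congr (_ +i* _); ring.
have two : (2%:R : R)%:C != 0 by rewrite eq_complex /= negb_and pnatr_eq0.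
split; last split; last split => //.
- split; first by apply/sdisc_real.
  move=> /sdisc_real; rewrite invr_gt0 => /(_ R0).
  rewrite normf_div ltr_pdivrMr // rmorphV ?unitfE ?gt_eqF //= => h.
  have : Rad%:C * `|p| < Rad%:C * ((Rad%:C)^-1 * `|q|) by rewrite ltr_pM2l // mulrC.
  by rewrite mulrA divff ?gt_eqF // mul1r => /(lt_trans B); rewrite ltxx.
- apply/eqP => hw; move: e1; rewrite hw addNr => /esym/eqP.
  by rewrite mulf_eq0 invr_eq0 (negbTE q0) orbF eq_complex /= pnatr_eq0.
- by rewrite /psi e1 e2; field; rewrite ?q0 ?two.
Qed.

Lemma prod_const_seq (F : numDomainType) (T : Type) (rs : seq T) (v : F) :
  \prod_(r <- rs) v = v ^+ size rs.
Proof. by elim: rs => [|r rs IH]; rewrite ?big_nil ?expr0 // big_cons IH exprS. Qed.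

Lemma poly_root (F : numClosedFieldType) (lam eta z0 : F) (d : nat) :
  (1 < d)%N -> lam != 0 -> eta != 0 ->
  exists zeta, lam * zeta + eta * zeta ^+ d = z0 /\ `|zeta| <= 2 * `|z0 / lam|.
Proof.
move=> d1 l0 e0.
have [->|z00] := eqVneq z0 0.
  exists 0; rewrite mul0r normr0 mulr0 mulr0 add0r expr0n.
  by case: d d1 => // d _ /=; rewrite mulr0.
set c := lam / eta; set c0 := - z0 / eta.
set P : {poly F} := 'X^d + (c *: 'X + c0%:P).
have sq : (size (c *: 'X + c0%:P)%R < size ('X^d : {poly F}))%N.
  rewrite size_polyXn (leq_ltn_trans (size_polyD _ _)) //.
  rewrite gtn_max (leq_ltn_trans (size_scale_leq _ _)) ?size_polyX //.
  by rewrite (leq_ltn_trans (size_polyC_leq1 _)) // ltnS ltnW.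
have lc : lead_coef P = 1 by rewrite lead_coefDl // lead_coefXn.
have sP : size P = d.+1 by rewrite size_polyDl // size_polyXn.
have [rs Prs] := closed_field_poly_normal P.
rewrite lc scale1r in Prs.
have srs : size rs = d by move: sP; rewrite Prs size_prod_XsubC => -[].
set x := z0 / lam.
have Px : P.[x] = x ^+ d.
  rewrite /P hornerD hornerXn hornerD hornerZ hornerX hornerC /c /c0 /x; field; rewrite l0 e0 //.
have Px' : \prod_(r <- rs) (x - r) = x ^+ d.
  by rewrite -Px Prs horner_prod; apply: eq_bigr => r _; rewrite hornerXsubC.
have [/hasP [r rin hr]|hn] := boolP (has (fun r => `|x - r| <= `|x|) rs).
  have : root P r by rewrite Prs root_prod_XsubC.
  rewrite /root /P hornerD hornerXn hornerD hornerZ hornerX hornerC /c /c0 => /eqP hP.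
  exists r; split.
    apply/eqP; rewrite -subr_eq0.
    have -> : lam * r + eta * r ^+ d - z0 = eta * (r ^+ d + (lam / eta * r + - z0 / eta)).
      by field.
    by rewrite hP mulr0.
  have e2 : 2 * `|x| = `|x| + `|x| by ring.
  have h := ler_distD x r 0; rewrite !subr0 distrC in h.
  by rewrite e2; apply: (le_trans h); rewrite lerD2r.
exfalso.
have xnz : 0 < `|x| by rewrite normr_gt0 /x mulf_neq0 // invr_eq0.
have : \prod_(r <- rs) `|x| < \prod_(r <- rs) `|x - r|.
  rewrite big_seq [X in _ < X]big_seq; apply: ltr_prod.
    by case: rs srs {Prs Px' hn} => [|? ?] /= srs; [move: d1; rewrite -srs|rewrite mem_head].
  move=> r rin; rewrite normr_ge0 /=.
  have : ~~ (`|x - r| <= `|x|).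
    by apply/negP => h; move/hasP: hn; apply; exists r.
  by rewrite real_ltNge ?normr_real.
by rewrite prod_const_seq -normr_prod Px' srs normrX ltxx.
Qed.

Lemma ratio (R : realFieldType) (Rad a b N : R) : 1 < Rad -> 0 < N ->
  2 * (1 + Rad ^+ 2) < N * (Rad ^+ 2 - 1) -> b ^+ 2 * N ^+ 2 <= 4 * (a ^+ 2 + b ^+ 2) ->
  a^+2 + (b+1)^+2 < Rad^+2 * (a^+2 + (b-1)^+2) /\
  a^+2 + (b-1)^+2 < Rad^+2 * (a^+2 + (b+1)^+2).
Proof.
move=> R1 N0 hN hb.
set Q := a ^+ 2 + b ^+ 2 + 1.
have Q1 : 1 <= Q by rewrite /Q lerDr addr_ge0 ?sqr_ge0.
have t1 : b * N <= Q.
  have : 0 <= (b * N - 2) ^+ 2 by rewrite sqr_ge0.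
  rewrite /Q; nra.
have t2 : - (b * N) <= Q.
  have : 0 <= (b * N + 2) ^+ 2 by rewrite sqr_ge0.
  rewrite /Q; nra.
have K : 2 * (1 + Rad ^+ 2) * Q < N * (Rad ^+ 2 - 1) * Q.
  by rewrite ltr_pM2r //; lra.
have e1 : a^+2 + (b+1)^+2 = Q + 2 * b by rewrite /Q; ring.
have e2 : a^+2 + (b-1)^+2 = Q - 2 * b by rewrite /Q; ring.
have R2 : 0 < 1 + Rad ^+ 2 by rewrite ltr_wpDr ?sqr_ge0.
rewrite e1 e2; split.
- suff : (Q + 2 * b) * N < Rad ^+ 2 * (Q - 2 * b) * N by rewrite ltr_pM2r.
  have : 2 * (1 + Rad ^+ 2) * (b * N) <= 2 * (1 + Rad ^+ 2) * Q by rewrite ler_pM2l // mulr_gt0.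
  nra.
- suff : (Q - 2 * b) * N < Rad ^+ 2 * (Q + 2 * b) * N by rewrite ltr_pM2r.
  have : 2 * (1 + Rad ^+ 2) * (- (b * N)) <= 2 * (1 + Rad ^+ 2) * Q by rewrite ler_pM2l // mulr_gt0.
  nra.
Qed.

Lemma bound_from_root (R : rcfType) (a b N : R) : 0 < N ->
  (Num.sqrt (a ^+ 2 + b ^+ 2) - a) * N ^+ 2 <= 2 * Num.sqrt (a ^+ 2 + b ^+ 2) ->
  b ^+ 2 * N ^+ 2 <= 4 * (a ^+ 2 + b ^+ 2).
Proof.
move=> N0 h.
have hQ : 0 <= a ^+ 2 + b ^+ 2 by rewrite addr_ge0 ?sqr_ge0.
have r0 : 0 <= Num.sqrt (a ^+ 2 + b ^+ 2) by apply: sqrtr_ge0.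
have r2 : Num.sqrt (a ^+ 2 + b ^+ 2) ^+ 2 = a ^+ 2 + b ^+ 2 by rewrite sqr_sqrtr.
move: r0 r2 h; set r := Num.sqrt _ => r0 r2 h.
have ar : `|a| <= r.
  by rewrite -(ler_pXn2r (n:=2)) ?nnegrE // real_normK ?num_real // r2 lerDl sqr_ge0.
have ha : a <= r by apply: le_trans ar; rewrite ler_norm.
have ha' : - a <= r by apply: le_trans ar; rewrite -normrN ler_norm.
have : (r - a) * N ^+ 2 * (r + a) <= 2 * r * (r + a) by apply: ler_wpM2r => //; lra.
nra.
Qed.
Import ComplexField.Normc.

Lemma normcC (R : rcfType) (x : R[i]) : `|x| = (normc x)%:C.
Proof. by []. Qed.

Lemma sdisc_le (R : rcfType) (a x : R[i]) : sdisc a x -> normc x <= normc a.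
Proof.
case=> u /= hu <-; rewrite normcM.
have := normr_ge0 a; rewrite normcC lecR => ha.
have : normc u < 1 by move: hu; rewrite normcC -[1]/(1%:C) ltcR.
move=> h; rewrite -[X in _ <= X]mulr1 ler_wpM2l // ltW //.
Qed.

Lemma sdisc_of_lt (R : rcfType) (a x : R[i]) : normc x < normc a -> sdisc a x.
Proof.
move=> h.
have a0 : a != 0.
  apply/eqP => a0; move: h; rewrite a0 normc0.
  have := normr_ge0 x; rewrite normcC lecR => hx hx'.
  by have := le_lt_trans hx hx'; rewrite ltxx.
exists (x / a); last by rewrite mulrC divfK.
rewrite /= normcC normcM normcV -[1]/(1%:C) ltcR.
have hp : 0 < normc a by have := normr_gt0 a; rewrite a0 normcC ltcR.
by rewrite ltr_pdivrMr // mul1r.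
Qed.

Lemma closure_fst (R : realType) (a : R[i]) (B : set R[i]) (z0 w0 : R[i]) :
  closure (sdisc a `*` B) (z0, w0) -> normc z0 <= normc a.
Proof.
move=> cl.
have hz := normr_ge0 z0; rewrite normcC lecR in hz.
have ha := normr_ge0 a; rewrite normcC lecR in ha.
rewrite leNgt; apply/negP => hlt.
set e := normc z0 - normc a.
have e0 : 0 < e%:C by rewrite ltcR subr_gt0.
have := cl (ball (z0, w0) e%:C) (nbhsx_ballx _ _ e0).
case=> [[x y]] [[/= Ax By]] [/= b1 b2].
have hx := @sdisc_le _ _ _ Ax.
move: b1; rewrite /ball /= normcC ltcR => b1.
have := le_normcD (z0 - x) x; rewrite subrK => h.
rewrite /e in b1; lra.
Qed.

Lemma findw (R : realType) (Rad : R) (lt : nat) : 1 < Rad ->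
  2 * (1 + Rad ^+ 2) < 2 ^+ lt * (Rad ^+ 2 - 1) ->
  forall c : R[i], exists w, annulus Rad w /\ w != - 'i /\ psi w ^+ (4 ^ lt) = c /\
    normc w < Rad.
Proof.
move=> R1 hN c.
have [a [b [ea hb]]] := root_lemma _ (2 * lt)%N c.
rewrite mulnC exprM in hb.
have N0 : 0 < (2 : R) ^+ lt by rewrite exprn_gt0.
have hb2 := bound_from_root _ _ _ _ N0 hb.
have [h1 h2] := ratio _ _ _ _ _ R1 N0 hN hb2.
have [ann [wi [ps nw]]] := key_w _ _ _ _ (lt_trans ltr01 R1) h1 h2.
eexists; split; first exact: ann.
split; first exact: wi.
split; first by rewrite ps -ea expnM.
by move: nw; rewrite normcC ltcR.
Qed.

Lemma rad_gt1 (R : realType) (Rad : R) : 0 < Rad ->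
  (forall k : 'I_3, psi_preim [set root3 R k] `<=` annulus Rad) -> 1 < Rad.
Proof.
move=> R0 h.
have ii : 'i * 'i = -1 :> R[i] by rewrite -expr2 sqr_i.
have h1 : psi_preim [set root3 R ord0] 1.
  split.
    by rewrite eq_complex /= negb_and; apply/orP; left; rewrite oppr0; exact: oner_neq0.
  rewrite /root3 /expi /= mulr0 mul0r cos0 sin0 /psi.
  have ne : (1 + 'i : R[i]) != 0.
    by rewrite eq_complex /= negb_and addr0; apply/orP; left; exact: oner_neq0.
  have e1 : 'i * 1 + 1 = 1 + 'i :> R[i] by simpc.
  have e2 : 1%:C + 'i * 0%:C = 1 :> R[i] by simpc.
  by rewrite e1 e2 divff.
have [/(sdisc_real _ _ _ R0) + _] := h _ _ h1.
by rewrite normr1 -[1]/(1%:C) ltcR.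
Qed.

Lemma pim (R : realType) (lamt eta : R[i]) (d : nat) (D A : set R[i]) (p : pt R)
  (z w c : R[i]) :
  p <> (0, 0, 0) -> D z -> A w -> c != 0 ->
  F_h lamt eta d (Psi_h (z, w, 1)) <> (0, 0, 0) ->
  p = (c * (F_h lamt eta d (Psi_h (z, w, 1))).1.1,
       c * (F_h lamt eta d (Psi_h (z, w, 1))).1.2,
       c * (F_h lamt eta d (Psi_h (z, w, 1))).2) ->
  pimage (F_h lamt eta d \o @Psi_h R) (aff (D `*` A)) p.
Proof.
move=> pn Dz Aw c0 Fn ep; split => //; exists (z, w, 1); split.
  by split; [exact: oner_neq0 | rewrite /= !divr1].
by split => //; exists c.
Qed.

Lemma ni (R : rcfType) : `|'i| = 1 :> R[i].
Proof. by simpc; rewrite expr0n /= add0r expr1n sqrtr1. Qed.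

Lemma mi_ann (R : rcfType) (Rad : R) : 1 < Rad -> annulus Rad (- 'i).
Proof.
move=> R1; have R0 : 0 < Rad by apply: lt_trans R1.
split.
  by apply/sdisc_real => //; rewrite normrN ni -[1]/(1%:C) ltcR.
move/sdisc_real; rewrite invr_gt0 => /(_ R0).
rewrite normrN ni -[1]/(1%:C) ltcR.
by rewrite invf_gt1 // ltNge (ltW R1).
Qed.
Theorem lemma6p2 (R : realType) (Rad eps0 lam : R) (l0 l : nat)
    (U : nat -> 'I_3 -> set R[i]) :
  (* R > 0 large enough that psi^{-1}({r_1,r_2,r_3}) lies in R D \ R^{-1} D *)
  0 < Rad ->
  (forall k : 'I_3, psi_preim [set root3 R k] `<=` annulus Rad) ->
  (* the data of the context: 0 < lam < 1, eps0 > 0, l0, open neighbourhoods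
     U l k of r_{k+1} (l >= l0) with exponentially shrinking diameters ... *)
  0 < lam < 1 ->
  0 < eps0 ->
  (forall l', (l0 <= l')%N -> forall k : 'I_3, open (U l' k) /\ U l' k (root3 R k)) ->
  (exists (Cst mu : R), 0 < Cst /\ 0 < mu < 1 /\
     forall l', (l0 <= l')%N -> forall k : 'I_3, forall x y,
       U l' k x -> U l' k y -> `|x - y| <= (Cst * mu ^+ l')%:C) ->
  (* ... such that (z,w) |-> (lam z + alpha w, w^(4^l')) maps
     (alpha eps0^{-1} D) x U_{l'} onto a set containing the closure of
     (alpha eps0^{-1} D) x (R D \ R^{-1} D) *)
  (forall l', (l0 <= l')%N -> forall alpha : R[i], alpha != 0 ->
     closure (sdisc (alpha / eps0%:C) `*` annulus Rad) `<=`
     [set (lam%:C * p.1 + alpha * p.2, p.2 ^+ (4 ^ l')) | p in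
        sdisc (alpha / eps0%:C) `*` \bigcup_k U l' k]) ->
  (* the chosen l *)
  (1 <= l)%N -> (l0 <= l)%N ->
  closure (\bigcup_k (U l k `|` psi_preim (U l k))) `<=` annulus Rad ->
  (* conclusion *)
  exists lt : nat, (1 <= lt)%N /\
  exists lamt : R, 1 < lamt /\
  forall alpha : R[i], alpha != 0 ->
  exists delta : R, 0 < delta /\
  forall eta : R[i], eta != 0 -> `|eta| < delta%:C ->
    (@Xline R `|` aff (closure (sdisc (alpha / eps0%:C) `*` \bigcup_k U l k)))
    `<=` pimage (F_h lamt%:C eta (4 ^ lt) \o @Psi_h R)
                (aff (sdisc (alpha / eps0%:C) `*` annulus Rad)).
Proof.
Proof.
move=> R0 hroots hlam heps hU hdiam hmap hl1 hl0l hcl.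
have R1 := rad_gt1 _ _ R0 hroots.
have Rm : 0 < Rad ^+ 2 - 1 by rewrite subr_gt0 expr_gt1 // ltW.
set K := 2 * (1 + Rad ^+ 2) / (Rad ^+ 2 - 1).
have hN : 2 * (1 + Rad ^+ 2) < 2 ^+ (Num.truncn K).+1 * (Rad ^+ 2 - 1).
  have h1 := truncnS_gt K.
  have h2 : ((Num.truncn K).+1 < 2 ^ (Num.truncn K).+1)%N by apply: ltn_expl.
  have h3 : K < 2 ^+ (Num.truncn K).+1.
    by apply: (lt_trans h1); rewrite -natrX ltr_nat.
  by rewrite -(ltr_pM2r Rm) /K divfK ?gt_eqF in h3.
exists (Num.truncn K).+1; split => //.
set lt := (Num.truncn K).+1.
exists (2 * Rad + 3); split; first lra.
move=> alpha a0; exists 1; split => // eta e0 _.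
have d1 : (1 < 4 ^ lt)%N by apply: (@leq_ltn_trans lt) => //; apply: ltn_expl.
have d0 : (0 < 4 ^ lt)%N by apply: ltnW.
have fw := findw _ _ _ R1 hN.
have ii : 'i * 'i = -1 :> R[i] by rewrite -expr2 sqr_i.
have D0 : sdisc (alpha / eps0%:C) 0.
  by exists 0; [rewrite /= normr0 ltr01 | rewrite mulr0].
move=> p [Xp | Ap].
- case: p Xp => [[z w'] t] [/= pnz z0]; subst z.
  have [t0|tn0] := eqVneq t 0.
  + subst t.
    have w0 : w' != 0 by apply/eqP => w0; apply: pnz; rewrite w0.
    have e1 : 'i * - 'i + 1 = 2 :> R[i] by rewrite mulrN ii opprK.
    have e2 : 'i * 1 + - 'i = 0 :> R[i] by rewrite mulr1 subrr.
    have two : (2 : R[i]) ^+ (4 ^ lt) != 0.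
      by rewrite expf_neq0 // eq_complex /= negb_and pnatr_eq0.
    apply: (@pim _ _ _ _ _ _ _ 0 (- 'i) (w' / 2 ^+ (4 ^ lt))) => //.
    * exact: mi_ann.
    * by rewrite mulf_neq0 // invr_eq0.
    * by rewrite /F_h /Psi_h /= e1 e2 => -[] _ h _; move: two; rewrite h eqxx.
    * rewrite /F_h /Psi_h /= e1 e2 !mulr0 !mul0r expr0n /= gtn_eqF //.
      by rewrite mulr0 addr0 mulr0 divfK.
  + have [w [ann [wi [ps _]]]] := fw (w' / t).
    have T0 : 'i * 1 + w != 0.
      by rewrite mulr1 addrC; apply: contra wi; rewrite addr_eq0 => /eqP ->.
    apply: (@pim _ _ _ _ _ _ _ 0 w (t / ('i * 1 + w) ^+ (4 ^ lt))) => //.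
    * by rewrite mulf_neq0 // invr_eq0 expf_neq0.
    * rewrite /F_h /Psi_h /= => -[] _ _ /eqP; apply/negP; exact: expf_neq0.
    * rewrite /F_h /Psi_h /= !mulr0 !mul0r expr0n /= gtn_eqF // mulr0 addr0 mulr0.
      congr (_, _, _); last by rewrite divfK // expf_neq0.
      move: ps; rewrite /psi expr_div_n => ps.
      by rewrite mulr1 [('i + w)]addrC mulrAC -mulrA ps mulrC divfK.
- case: p Ap => [[z' w'] t] [/= tn0 cl].
  have pnz : (z', w', t) <> (0, 0, 0).
    by case=> _ _ t0; move: tn0; rewrite t0 eqxx.
  have hz0 := closure_fst _ _ _ _ _ cl.
  have [w [ann [wi [ps nw]]]] := fw (w' / t).
  have T0 : 'i * 1 + w != 0.
    by rewrite mulr1 addrC; apply: contra wi; rewrite addr_eq0 => /eqP ->.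
  set T := 'i * 1 + w in T0 *.
  set L := 2 * Rad + 3.
  have Lp : 0 < L by rewrite /L; lra.
  have L0 : L%:C != 0 by rewrite eq_complex /= negb_and gt_eqF.
  have [zeta [hzeta hb]] := poly_root _ _ _ (z' / t) _ d1 L0 e0.
  apply: (@pim _ _ _ _ _ _ _ (zeta * T) w (t / T ^+ (4 ^ lt))) => //.
  * apply: sdisc_of_lt.
    have nI : normc ('i : R[i]) = 1.
      by have := ni R; rewrite normcC; apply: complexI.
    have nL : normc (L%:C) = L.
      by rewrite /= expr0n /= addr0 sqrtr_sqr ger0_norm // ltW.
    have ge0 : forall x : R[i], 0 <= normc x.
      by move=> x; have := normr_ge0 x; rewrite normcC lecR.
    have nT : normc T <= 1 + normc w.
      have nI1 : normc ('i * 1 : R[i]) = 1 by rewrite mulr1.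
      by have := le_normcD ('i * 1) w; rewrite nI1.
    have hb' : normc zeta <= 2 * (normc (z' / t) / L).
      rewrite -{1}nL -normcV -normcM -lecR rmorphM /=.
      by move: hb; rewrite !normcC rmorph_nat.
    have A0 : 0 < normc (alpha / eps0%:C).
      rewrite lt0r ge0 andbT; apply/eqP => /eq0_normc /eqP.
      rewrite mulf_eq0 invr_eq0 (negbTE a0) /= eq_complex /= eqxx andbT.
      by rewrite gt_eqF.
    rewrite normcM.
    move: (ge0 zeta) (ge0 T) (ge0 (z' / t)) hb' hz0 nT nw A0.
    set nz := normc zeta; set nT' := normc T; set u := normc (z' / t).
    set A := normc (alpha / eps0%:C); set nw' := normc w.
    move=> g1 g2 g3 h1 h2 h3 h4 h5.
    have hu : 0 <= u / L by rewrite divr_ge0 // ltW.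
    have k1 : nz * nT' <= 2 * (u / L) * nT' by rewrite ler_wpM2r.
    have k2 : 2 * (u / L) * nT' <= 2 * (u / L) * (1 + Rad).
      by apply: ler_wpM2l; [rewrite mulr_ge0 | lra].
    have k3 : u / L * L = u by rewrite divfK // gt_eqF.
    have k4 : 2 * (u / L) * (1 + Rad) = u - u / L.
      by rewrite -{2}k3 /L; ring.
    have [v0|vp] := eqVneq (u / L) 0.
      have : u = 0 by rewrite -k3 v0 mul0r.
      lra.
    have : 0 < u / L by rewrite lt0r vp hu.
    lra.
  * by rewrite mulf_neq0 // invr_eq0 expf_neq0.
  * rewrite /F_h /Psi_h /= => -[] _ _ /eqP; apply/negP; exact: expf_neq0.
  * rewrite /F_h /Psi_h /=.
    have eT : T ^+ (4 ^ lt) = T * T ^+ (4 ^ lt).-1 by rewrite -exprS prednK.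
    have Y0 : T * T ^+ (4 ^ lt).-1 != 0 by rewrite mulf_neq0 // expf_neq0.
    congr (_, _, _).
    - rewrite eT exprMn eT.
      have -> : L%:C * (zeta * T) * T ^+ (4 ^ lt).-1 +
          eta * (zeta ^+ (4 ^ lt) * (T * T ^+ (4 ^ lt).-1)) =
          (L%:C * zeta + eta * zeta ^+ (4 ^ lt)) * (T * T ^+ (4 ^ lt).-1) by ring.
      by rewrite hzeta; field; rewrite tn0 T0 expf_neq0.
    - move: ps; rewrite /psi expr_div_n => ps.
      rewrite /T mulr1 [('i + w)]addrC. rewrite mulrAC. rewrite -mulrA. rewrite ps. by rewrite mulrC divfK.
    - by rewrite -/T divfK // expf_neq0.
Qed.
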